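(* Let $p$ be a prime number and let $A=\{1,p,p^2,p^3,\dots\}$. For every positive integer $n$, $$\sum_{k=1}^{n}N^p_A(k)\big(q^e_A(n-k)-q^o_A(n-k)\big)=\vartheta_p(n)+1.$$
   Context: For a set $A$ of positive integers, $N^p_A(n)$ is the total number of parts, summed over all partitions of $n$ with parts in $A$. $q^e_A(m)$ (resp. $q^o_A(m)$) is the number of partitions of $m$ into pairwise distinct parts from $A$ with an even (resp. odd) number of parts; $q^e_A(0)=1$, $q^o_A(0)=0$. $\vartheta_p(n)$ is the $p$-adic valuation of $n$. *)

(* Defs.v *)
From mathcomp Require Import all_boot all_order all_algebra.
Set Implicit Arguments. Unset Strict Implicit. Unset Printing Implicit Defensive.

(* A partition of n with parts in A is encoded by its multiplicity function
   f : 'I_n.+1 -> 'I_n.+1 (f i = number of parts equal to i); only positive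
   parts belonging to A may have nonzero multiplicity, and sum_i i * f i = n.
   (Multiplicities and part sizes are at most n, so this is a bijection with
   the partitions of n with parts in A.) *)
Definition partitionsA (A : pred nat) (n : nat) : {set {ffun 'I_n.+1 -> 'I_n.+1}} :=
  [set f : {ffun 'I_n.+1 -> 'I_n.+1} | [forall i : 'I_n.+1, (0 < f i)%N ==> (0 < i)%N && (nat_of_ord i \in A)]
           && ((\sum_(i < n.+1) i * f i)%N == n)].

Definition NA (A : pred nat) (n : nat) : nat :=
  (\sum_(f in partitionsA A n) \sum_(i < n.+1) nat_of_ord (f i))%N.

(* Partitions of m into pairwise distinct parts from A, encoded as their set
   of parts (a subset of {1,...,m}). *)
Definition distinct_partitionsA (A : pred nat) (m : nat) : {set {set 'I_m.+1}} :=
  [set S : {set 'I_m.+1} | [forall i in S, (0 < i)%N && (nat_of_ord i \in A)]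
                           && ((\sum_(i in S) nat_of_ord i)%N == m)].

Definition qeA (A : pred nat) (m : nat) : nat :=
  #|[set S in distinct_partitionsA A m | ~~ odd #|S|]|.
Definition qoA (A : pred nat) (m : nat) : nat :=
  #|[set S in distinct_partitionsA A m | odd #|S|]|.

(* A = {1, p, p^2, ...}; since p^i = x forces i <= x for p >= 2, the
   bounded exponent is no restriction. *)
Definition powers (p : nat) : pred nat :=
  fun x => [exists i : 'I_x.+1, x == p ^ i].

(* Main.v *)
Require Import Defs.
From mathcomp Require Import all_boot all_order all_algebra ring.
Import GRing.Theory Num.Theory.
Local Open Scope ring_scope.


Definition eqt (k : nat) (P Q : {poly int}) := forall t, (t <= k)%N -> P`_t = Q`_t.

Lemma eqt_refl k P : eqt k P P. Proof. by []. Qed.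
Lemma eqt_sym k P Q : eqt k P Q -> eqt k Q P. Proof. by move=> h t ht; rewrite h. Qed.
Lemma eqt_trans k P Q R : eqt k P Q -> eqt k Q R -> eqt k P R.
Proof. by move=> h1 h2 t ht; rewrite h1 // h2. Qed.
Lemma eqtD k P Q P' Q' : eqt k P P' -> eqt k Q Q' -> eqt k (P + Q) (P' + Q').
Proof. by move=> h1 h2 t ht; rewrite !coefD h1 // h2. Qed.
Lemma eqtM k P Q P' Q' : eqt k P P' -> eqt k Q Q' -> eqt k (P * Q) (P' * Q').
Proof.
move=> h1 h2 t ht; rewrite !coefM; apply: eq_bigr => i _.
have hi : (i <= k)%N by apply: leq_trans ht; rewrite -ltnS.
by rewrite h1 // h2 // (leq_trans (leq_subr _ _) ht).
Qed.
Lemma eqt_sum k m n (F G : nat -> {poly int}) :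
  (forall i, (m <= i < n)%N -> eqt k (F i) (G i)) ->
  eqt k (\sum_(m <= i < n) F i) (\sum_(m <= i < n) G i).
Proof.
move=> h; rewrite big_nat_cond [X in eqt _ _ X]big_nat_cond.
apply: (big_ind2 (eqt k)) => //; [move=> *; exact: eqtD|idtac].
by move=> i /andP[hi _]; apply: h.
Qed.
Lemma eqt_prod k m n (F G : nat -> {poly int}) :
  (forall i, (m <= i < n)%N -> eqt k (F i) (G i)) ->
  eqt k (\prod_(m <= i < n) F i) (\prod_(m <= i < n) G i).
Proof.
move=> h; rewrite big_nat_cond [X in eqt _ _ X]big_nat_cond.
apply: (big_ind2 (eqt k)) => //; [move=> *; exact: eqtM|idtac].
by move=> i /andP[hi _]; apply: h.
Qed.
Lemma eqt_sum_cut k m n (F : nat -> {poly int}) : (m <= n)%N ->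
  (forall i, (m <= i < n)%N -> eqt k (F i) 0) ->
  eqt k (\sum_(0 <= i < n) F i) (\sum_(0 <= i < m) F i).
Proof.
move=> hmn h; rewrite (@big_cat_nat _ _ _ m) //.
rewrite -[X in eqt _ _ X]addr0; apply: eqtD => //.
apply: (@eqt_trans _ _ (\sum_(m <= i < n) (0 : {poly int}))); first exact: eqt_sum.
by rewrite big1_eq.
Qed.
Lemma eqt_prod_cut k m n (F : nat -> {poly int}) : (m <= n)%N ->
  (forall i, (m <= i < n)%N -> eqt k (F i) 1) ->
  eqt k (\prod_(0 <= i < n) F i) (\prod_(0 <= i < m) F i).
Proof.
move=> hmn h; rewrite (@big_cat_nat _ _ _ m) //.
rewrite -[X in eqt _ _ X]mulr1; apply: eqtM => //.
apply: (@eqt_trans _ _ (\prod_(m <= i < n) (1 : {poly int}))); first exact: eqt_prod.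
by rewrite big1_eq.
Qed.
Lemma eqt_Xn k d P : (k < d)%N -> eqt k ('X^d * P) 0.
Proof. by move=> hd t ht; rewrite coefXnM coef0 (leq_ltn_trans ht hd). Qed.
Lemma eqt_Xn' k d : (k < d)%N -> eqt k ('X^d) 0.
Proof. by move=> hd; rewrite -[_ ^+ _]mulr1; apply: eqt_Xn. Qed.


Definition aA (A : pred nat) (i : nat) : bool := (0 < i)%N && (i \in A).
Definition cnd A (i j : nat) : bool := (0 < j)%N ==> aA A i.
Definition Fm A (i j : nat) : {poly int} := if cnd A i j then 'X^(i * j) else 0.
Definition Hm A (i0 i j : nat) : {poly int} := (if i == i0 then j%:R else 1) * Fm A i j.
Definition NP A N := \sum_(0 <= i0 < N.+1) \prod_(0 <= i < N.+1) \sum_(0 <= j < N.+1) Hm A i0 i j.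
Definition QP A N := \prod_(0 <= i < N.+1) (1 - (if aA A i then 'X^i else 0 : {poly int})).
Definition NP' := NP.

Lemma prodFm A n (f : {ffun 'I_n.+1 -> 'I_n.+1}) :
  \prod_(i < n.+1) Fm A i (f i) =
  if [forall i : 'I_n.+1, cnd A i (f i)] then 'X^(\sum_(i < n.+1) (i * f i)%N) else 0.
Proof.
case: forallP => [h|h].
  rewrite -prodrXr; apply: eq_bigr => i _; by rewrite /Fm h.
have [i hi] : exists i : 'I_n.+1, ~~ cnd A i (f i).
  by apply/existsP; rewrite -negb_forall; apply/forallP.
by rewrite (bigD1 i) //= /Fm (negbTE hi) mul0r.
Qed.

Lemma NA_coef A k : (NA A k)%:Z = (NP A k)`_k.
Proof.
rewrite /NP big_mkord.
under eq_bigr => i0 _ do (rewrite big_mkord; under eq_bigr => i _ do rewrite big_mkord).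
under eq_bigr => i0 _ do rewrite bigA_distr_bigA /=.
rewrite exchange_big /= coef_sum.
rewrite /NA -natz natr_sum big_mkcond /=.
apply: eq_bigr => f _.
have -> : \sum_(i0 < k.+1) \prod_(i < k.+1) Hm A i0 i (f i)
   = (\prod_(i < k.+1) Fm A i (f i)) *+ (\sum_(i0 < k.+1) f i0).
  rewrite -sumrMnr; apply: eq_bigr => i0 _.
  rewrite /Hm big_split /= -mulr_natl; congr (_ * _).
  by rewrite -big_mkcond /= (big_pred1 i0).
rewrite coefMn prodFm /partitionsA inE.
have -> : [forall i : 'I_k.+1, (0 < f i)%N ==> (0 < i)%N && (nat_of_ord i \in A)]
   = [forall i : 'I_k.+1, cnd A i (f i)] by [].
case: [forall i : 'I_k.+1, cnd A i (f i)] => /=; last by rewrite coef0 mul0rn.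
rewrite coefXn eq_sym; case: eqP => _ //=.
by rewrite mul0rn.
Qed.

Lemma prodG A n (J : {set 'I_n.+1}) :
  \prod_(i in J) (if aA A i then 'X^i else 0 : {poly int}) =
  if [forall i in J, aA A i] then 'X^(\sum_(i in J) (i : nat)) else 0.
Proof.
case: forall_inP => [h|h].
  rewrite -prodrXr; apply: eq_bigr => i hi; by rewrite h.
have [i hiJ hi] : exists2 i : 'I_n.+1, i \in J & ~~ aA A i.
  apply/exists_inP; rewrite -negb_forall_in; apply/forall_inP => //.
by rewrite (bigD1 i) //= (negbTE hi) mul0r.
Qed.

Lemma QP_coef A m : (qeA A m)%:Z - (qoA A m)%:Z = (QP A m)`_m.
Proof.
have card_ind (X : {set {set 'I_m.+1}}) : (#|X|%:Z) = \sum_J ((J \in X)%:R : int).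
  rewrite -sum1_card -natz natr_sum big_mkcond /=; apply: eq_bigr => J _.
  by case: (J \in X).
rewrite /qeA /qoA !card_ind -sumrB /QP big_mkord.
have -> : \prod_(i < m.+1) (1 - (if aA A i then 'X^i else 0 : {poly int}))
   = \prod_(i < m.+1) (- (if aA A i then 'X^i else 0) + 1).
  by apply: eq_bigr => i _; rewrite addrC.
rewrite bigA_distr coef_sum; apply: eq_bigr => J _.
rewrite -big_mkcond /= prodrN prodG -signr_odd mulr_sign.
rewrite /distinct_partitionsA !inE.
have -> : [forall i in J, (0 < i)%N && (nat_of_ord i \in A)] = [forall i in J, aA A i] by [].
case: [forall i in J, aA A i] => /=; last first.
  by case: (odd #|J|); rewrite ?oppr0 coef0 ?subrr.
by case: (odd #|J|); rewrite /= ?coefN coefXn ?andbT ?andbF ?subr0 ?sub0r eq_sym.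
Qed.


Lemma eqt_mulc k c P : eqt k P 0 -> eqt k (c * P) 0.
Proof. by move=> h; rewrite -(mulr0 c); apply: eqtM. Qed.

Lemma Fm_deg A k i j : (k < i * j)%N -> eqt k (Fm A i j) 0.
Proof. by move=> h; rewrite /Fm; case: ifP => _ //; apply: eqt_Xn'. Qed.

Lemma Fm_small A k i j : (k < j)%N -> eqt k (Fm A i j) 0.
Proof.
case: i => [|i] h.
  by rewrite /Fm /cnd /aA /= (leq_ltn_trans (leq0n k) h).
by apply: Fm_deg; apply: (leq_trans h); rewrite leq_pmull.
Qed.

Lemma Hm_small A k i0 i j : (k < j)%N -> eqt k (Hm A i0 i j) 0.
Proof. by move=> h; apply: eqt_mulc; apply: Fm_small. Qed.

Lemma inner_cut A k N i0 : (k <= N)%N ->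
  eqt k (\prod_(0 <= i < N.+1) \sum_(0 <= j < N.+1) Hm A i0 i j)
        (\prod_(0 <= i < N.+1) \sum_(0 <= j < k.+1) Hm A i0 i j).
Proof.
move=> hk; apply: eqt_prod => i _; apply: eqt_sum_cut => // j /andP[hj _].
exact: Hm_small.
Qed.

Lemma sum_k1_one A k i0 i : (k < i)%N -> i != i0 ->
  eqt k (\sum_(0 <= j < k.+1) Hm A i0 i j) 1.
Proof.
move=> hi hne; rewrite big_nat_recl // -[X in eqt _ _ X]addr0; apply: eqtD.
  by rewrite /Hm (negbTE hne) mul1r /Fm /cnd /= muln0 expr0.
apply: (@eqt_trans _ _ (\sum_(0 <= j < k) (0 : {poly int}))); last by rewrite big1_eq.
apply: eqt_sum => j _; apply: eqt_mulc; apply: Fm_deg.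
by apply: (leq_trans hi); rewrite leq_pmulr.
Qed.

Lemma sum_k1_zero A k i0 : (k < i0)%N ->
  eqt k (\sum_(0 <= j < k.+1) Hm A i0 i0 j) 0.
Proof.
move=> hi; rewrite big_nat_recl // -[X in eqt _ _ X]addr0; apply: eqtD.
  by rewrite /Hm eqxx mul0r.
apply: (@eqt_trans _ _ (\sum_(0 <= j < k) (0 : {poly int}))); last by rewrite big1_eq.
apply: eqt_sum => j _; apply: eqt_mulc; apply: Fm_deg.
by apply: (leq_trans hi); rewrite leq_pmulr.
Qed.

Lemma prod_zero_at k m n (F : nat -> {poly int}) i0 : (m <= i0 < n)%N ->
  eqt k (F i0) 0 -> eqt k (\prod_(m <= i < n) F i) 0.
Proof.
move=> /andP[h1 h2] h; rewrite (@big_cat_nat _ _ _ i0) //; last exact: ltnW.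
rewrite (@big_ltn _ _ _ i0 n) //.
apply: (@eqt_trans _ _ ((\prod_(m <= i < i0) F i) * 0)); last by move=> t _; rewrite mulr0.
apply: eqtM => //.
apply: (@eqt_trans _ _ (0 * (\prod_(i0.+1 <= i < n) F i))); last by move=> t _; rewrite mul0r.
exact: eqtM.
Qed.

Lemma NP_trunc A k N : (k <= N)%N -> eqt k (NP A N) (NP A k).
Proof.
move=> hk; rewrite /NP.
apply: (@eqt_trans _ _ (\sum_(0 <= i0 < N.+1) \prod_(0 <= i < N.+1) \sum_(0 <= j < k.+1) Hm A i0 i j)).
  by apply: eqt_sum => i0 _; apply: inner_cut.
apply: (@eqt_trans _ _ (\sum_(0 <= i0 < k.+1) \prod_(0 <= i < N.+1) \sum_(0 <= j < k.+1) Hm A i0 i j)).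
  apply: eqt_sum_cut => // i0 /andP[h1 h2].
  apply: (@prod_zero_at _ _ _ _ i0); first by rewrite leq0n.
  exact: sum_k1_zero.
apply: eqt_sum => i0 /andP[_ h0]; apply: eqt_prod_cut => // i /andP[h1 h2].
apply: sum_k1_one => //; rewrite neq_ltn; apply/orP; right.
exact: leq_trans h0 h1.
Qed.

Lemma QP_trunc A k N : (k <= N)%N -> eqt k (QP A N) (QP A k).
Proof.
move=> hk; rewrite /QP; apply: eqt_prod_cut => // i /andP[h1 _].
rewrite -[X in eqt _ _ X]subr0; apply: eqtD => //.
case: ifP => _; last by rewrite oppr0.
by rewrite -mulrN1 oppr0; apply: eqt_Xn.
Qed.


Lemma geom (Y : {poly int}) m : (\sum_(0 <= j < m) Y ^+ j) * (1 - Y) = 1 - Y ^+ m.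
Proof.
elim: m => [|m IH]; first by rewrite big_geq // mul0r expr0 subrr.
rewrite big_nat_recr //= mulrDl IH exprS; ring.
Qed.

Lemma geom2 (Y : {poly int}) m :
  (\sum_(0 <= j < m.+1) j%:R * Y ^+ j) * (1 - Y) =
  \sum_(0 <= j < m) Y ^+ j.+1 - m%:R * Y ^+ m.+1.
Proof.
elim: m => [|m IH]; first by rewrite big_nat1 big_geq // !mul0r subrr.
rewrite big_nat_recr //= mulrDl IH big_nat_recr //= !exprS; ring.
Qed.

Definition gq A (i : nat) : {poly int} := if aA A i then 'X^i else 0.
Definition Sg A n i0 i := \sum_(0 <= j < n.+1) Hm A i0 i j.
Definition T A n i : {poly int} := if aA A i then \sum_(0 <= j < n) 'X^(i * j.+1) else 0.

Lemma fac_ne A n i0 i : i != i0 -> eqt n (Sg A n i0 i * (1 - gq A i)) 1.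
Proof.
move=> hne; rewrite /Sg /gq /Hm (negbTE hne).
case hai: (aA A i).
  have -> : \sum_(0 <= j < n.+1) 1 * Fm A i j = \sum_(0 <= j < n.+1) ('X^i) ^+ j.
    by apply: eq_bigr => j _; rewrite mul1r /Fm /cnd hai implybT exprM.
  rewrite geom -[X in eqt _ _ X]subr0; apply: eqtD => //.
  rewrite -exprM -mulrN1 oppr0; apply: eqt_Xn.
  by move: hai => /andP[hi _]; rewrite (leq_trans (ltnSn n)) // leq_pmull.
rewrite big_nat_recl // big1 => [|j _]; last by rewrite mul1r /Fm /cnd hai.
by rewrite mul1r /Fm /cnd /= muln0 expr0 addr0 subr0 mulr1.
Qed.

Lemma fac_eq A n i : eqt n (Sg A n i i * (1 - gq A i)) (T A n i).
Proof.
rewrite /Sg /gq /Hm /T eqxx.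
case hai: (aA A i); last first.
  rewrite big1 ?mul0r // => j _; rewrite /Fm /cnd hai.
  by case: j => [|j] /=; rewrite ?mul0r // mulr0.
have -> : \sum_(0 <= j < n.+1) j%:R * Fm A i j = \sum_(0 <= j < n.+1) j%:R * ('X^i) ^+ j.
  by apply: eq_bigr => j _; rewrite /Fm /cnd hai implybT exprM.
rewrite geom2.
have -> : \sum_(0 <= j < n) ('X^i) ^+ j.+1 = \sum_(0 <= j < n) 'X^(i * j.+1) :> {poly int}.
  by apply: eq_bigr => j _; rewrite exprM.
rewrite -[X in eqt _ _ X]addr0; apply: eqtD => //.
rewrite -exprM -mulNr mulrC; apply: eqt_Xn.
by move: hai => /andP[hi _]; rewrite (leq_trans (ltnSn n)) // leq_pmull.
Qed.

Lemma prod_if n i0 (c : {poly int}) : (i0 < n)%N ->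
  \prod_(0 <= i < n) (if i == i0 then c else 1) = c.
Proof.
move=> h; rewrite (@big_cat_nat _ _ _ i0) //=; last exact: ltnW.
rewrite (@big_ltn _ _ _ i0 n) // eqxx big1_seq => [|i /andP[_]]; last first.
  by rewrite mem_index_iota => /andP[_ hi]; rewrite (ltn_eqF hi).
rewrite big1_seq => [|i /andP[_]]; last first.
  by rewrite mem_index_iota => /andP[hi _]; rewrite eq_sym (ltn_eqF hi).
by rewrite mul1r mulr1.
Qed.

Lemma main_prod A n i0 : (i0 <= n)%N ->
  eqt n (\prod_(0 <= i < n.+1) (Sg A n i0 i * (1 - gq A i))) (T A n i0).
Proof.
move=> h; apply: (@eqt_trans _ _ (\prod_(0 <= i < n.+1) (if i == i0 then T A n i0 else 1))).
  apply: eqt_prod => i _; case: eqP => [->|/eqP ne]; [exact: fac_eq | exact: fac_ne].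
by rewrite prod_if.
Qed.

Lemma prodQP_NP A n : eqt n (NP A n * QP A n) (\sum_(0 <= i0 < n.+1) T A n i0).
Proof.
rewrite /NP /QP mulr_suml; apply: eqt_sum => i0 /andP[_ hi0].
rewrite -big_split /=; exact: main_prod.
Qed.

Local Close Scope ring_scope.

Lemma sum_eq_nat n c : (\sum_(0 <= j < n) (j == c : nat) = (c < n))%N.
Proof.
elim: n => [|n IH]; first by rewrite big_geq.
rewrite big_nat_recr //= IH.
case: (ltngtP c n) => [h|h|->].
- by rewrite ltnS ltnW.
- by rewrite ltnS leqNgt h.
- by rewrite ltnSn.
Qed.

Lemma count_j i0 n : (0 < i0)%N -> (0 < n)%N ->
  (\sum_(0 <= j < n) (n == i0 * j.+1 : nat) = (i0 %| n))%N.
Proof.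
move=> hi hn; case: (boolP (i0 %| n)) => hd.
  move/dvdnP: (hd) => [q hq].
  have hq0 : (0 < q)%N by move: hn; rewrite hq muln_gt0 => /andP[].
  have hqn : (q.-1 < n)%N.
    by rewrite hq (leq_trans _ (leq_pmulr _ hi)) // prednK.
  transitivity (\sum_(0 <= j < n) (j == q.-1 : nat))%N; last by rewrite sum_eq_nat hqn.
  apply: eq_bigr => j _; rewrite hq mulnC eqn_pmul2l //.
  by case: q hq hq0 {hqn} => // q _ _ /=; rewrite eq_sym.
rewrite big1 // => j _; case: eqP => // h; by move: hd; rewrite h (dvdn_mulr _ (dvdnn i0)).
Qed.

Lemma count_pow p n : prime p -> (0 < n)%N ->
  (\sum_(0 <= i < n.+1) (aA (powers p) i && (i %| n)) = (logn p n).+1)%N.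
Proof.
move=> pp hn; set L := logn p n.
have p1 := prime_gt1 pp.
have key i : (aA (powers p) i && (i %| n) : nat) = \sum_(0 <= e < L.+1) (i == p ^ e : nat).
  case: (boolP (aA (powers p) i && (i %| n))) => [/andP[/andP[hi /existsP[e /eqP he]] hd]|h].
    rewrite he in hd *.
    have heL : (e <= L)%N by rewrite -pfactor_dvdn.
    rewrite (eq_bigr (fun j : nat => (j == (e : nat) : nat))); last first.
      by move=> j _; rewrite eqn_exp2l // eq_sym.
    by rewrite sum_eq_nat ltnS heL.
  rewrite big_nat_cond big1 // => e /andP[/andP[_ he] _].
  case: eqP => // hie; move: h; rewrite hie.
  have hd : (p ^ e %| n) by rewrite pfactor_dvdn.
  rewrite hd andbT /aA expn_gt0 prime_gt0 //=.
  suff : p ^ e \in powers p by move=> ->.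
  apply/existsP; exists (Ordinal (ltnW (ltn_expl e p1) : (e < (p ^ e).+1)%N)).
  by [].
rewrite (eq_bigr _ (fun i _ => key i)) exchange_big_nat /=.
rewrite (eq_big_nat _ _ (F2 := fun _ => 1%N)); last first.
  move=> e /andP[_ he]; rewrite (eq_bigr (fun j => (j == p ^ e : nat))) // sum_eq_nat ltnS.
  suff -> : (p ^ e <= n)%N by [].
  by apply: dvdn_leq => //; rewrite pfactor_dvdn.
by rewrite sum1_size size_iota subn0.
Qed.

Local Open Scope ring_scope.

Lemma coefT A n : (0 < n)%N ->
  (\sum_(0 <= i0 < n.+1) T A n i0)`_n = (\sum_(0 <= i0 < n.+1) (aA A i0 && (i0 %| n)))%N%:R.
Proof.
move=> hn; rewrite coef_sum natr_sum; apply: eq_bigr => i0 _; rewrite /T.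
case hai: (aA A i0) => /=; last by rewrite coef0.
have hi0 : (0 < i0)%N by move: hai => /andP[].
rewrite coef_sum -(@count_j i0 n hi0 hn) natr_sum; apply: eq_bigr => j _.
by rewrite coefXn.
Qed.

Lemma NA0 A : NA A 0 = 0%N.
Proof.
rewrite /NA big1 // => f _; rewrite big1 // => i _.
by case: (f i) => -[].
Qed.

Theorem corollary7 (p n : nat) : prime p -> (0 < n)%N ->
  \sum_(1 <= k < n.+1)
      (NA (powers p) k)%:Z * ((qeA (powers p) (n - k))%:Z - (qoA (powers p) (n - k))%:Z)
  = (logn p n)%:Z + 1.
Proof.
move=> pp hn; set A := powers p.
have E : (NP A n * QP A n)`_n = \sum_(1 <= k < n.+1)
      (NA A k)%:Z * ((qeA A (n - k))%:Z - (qoA A (n - k))%:Z).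
  rewrite coefM -(big_mkord xpredT (fun j => (NP A n)`_j * (QP A n)`_(n - j))).
  rewrite big_ltn // (@NP_trunc A 0 n (leq0n n) 0 (leqnn 0)) -NA_coef NA0 mul0r add0r.
  apply: eq_big_nat => k /andP[hk1 hk2].
  have hkn : (k <= n)%N by rewrite -ltnS.
  rewrite (@NP_trunc A k n hkn k (leqnn k)) -NA_coef.
  by rewrite (@QP_trunc A (n - k)%N n (leq_subr _ _) (n - k)%N (leqnn _)) QP_coef.
rewrite -E (@prodQP_NP A n n (leqnn n)) coefT // count_pow //.
by rewrite -natr1 natz.
Qed.
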